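(* Let $a<b$ and let $f:[a,b]\to\mathbb{R}$ be continuous. For $a\le u<x\le b$ write $I_f(u,x)=\frac{1}{x-u}\int_u^x f(t)\,\mathrm{d}t$. If $$\bigl[f(a)-I_f(a,b)\bigr]\cdot\bigl[f(b)-I_f(a,b)\bigr]\geq 0,$$ then there exists $\eta\in(a,b]$ such that $f(\eta)=I_f(a,\eta)$.
   Context: $I_f(u,x)$ denotes the integral mean of $f$ over $[u,x]$. *)

(* Defs.v *)
From Stdlib Require Import Reals.
From Coquelicot Require Import Coquelicot.
Open Scope R_scope.

Definition continuous_on_Icc (f : R -> R) (a b : R) : Prop :=
  forall x, a <= x <= b ->
    filterlim f (within (fun y => a <= y <= b) (locally x)) (locally (f x)).

Definition I_mean (f : R -> R) (u x : R) : R := RInt f u x / (x - u).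

(* Main.v *)
Require Import Defs.
From Stdlib Require Import Reals Lra.
From Coquelicot Require Import Coquelicot.
Open Scope R_scope.

Definition clamp (a b x : R) := Rmax a (Rmin b x).

Lemma clamp_in a b x : a <= b -> a <= clamp a b x <= b.
Proof. intros; unfold clamp, Rmax, Rmin; repeat destruct Rle_dec; lra. Qed.

Lemma clamp_id a b x : a <= x <= b -> clamp a b x = x.
Proof. intros; unfold clamp, Rmax, Rmin; repeat destruct Rle_dec; lra. Qed.

Lemma clamp_lip a b x y : a <= b -> Rabs (clamp a b y - clamp a b x) <= Rabs (y - x).
Proof.
  intros; unfold clamp, Rmax, Rmin; repeat destruct Rle_dec;
  unfold Rabs; repeat destruct Rcase_abs; lra.
Qed.

Lemma clamp_cont (f : R -> R) a b x : a <= b -> continuous_on_Icc f a b ->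
  continuous (fun y => f (clamp a b y)) x.
Proof.
  intros hab hf.
  apply (filterlim_comp _ _ _ (clamp a b) f _ (within (fun y => a <= y <= b) (locally (clamp a b x)))).
  - intros P [d Hd]. exists d. intros y Hy. apply Hd.
    + change (Rabs (clamp a b y - clamp a b x) < d).
      eapply Rle_lt_trans. apply clamp_lip; auto. exact Hy.
    + apply clamp_in; auto.
  - apply hf. apply clamp_in; auto.
Qed.

Lemma deriv_pos_left (H : R -> R) c l d : derivable_pt_lim H c l -> 0 < l -> 0 < d ->
  exists x, c - d < x < c /\ H x < H c.
Proof.
  intros HD hl hd. destruct (HD l hl) as [del Hdel].
  set (h := - Rmin (d/2) (del/2)).
  assert (hm : 0 < Rmin (d/2) (del/2)) by (apply Rmin_pos; pose proof (cond_pos del); lra).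
  assert (h1 : Rmin (d/2) (del/2) <= d/2) by apply Rmin_l.
  assert (h2 : Rmin (d/2) (del/2) <= del/2) by apply Rmin_r.
  assert (hh : h <> 0) by (unfold h; lra).
  assert (ha : Rabs h < del) by (unfold h; rewrite Rabs_Ropp, Rabs_pos_eq; lra).
  specialize (Hdel h hh ha).
  exists (c + h). split. unfold h; lra.
  apply Rabs_def2 in Hdel. destruct Hdel as [_ Hq].
  assert (q : 0 < (H (c + h) - H c) / h) by lra.
  assert (hn : h < 0) by (unfold h; lra).
  assert (E : H (c + h) - H c = ((H (c + h) - H c) / h) * h) by (field; lra).
  nra.
Qed.

Lemma deriv_neg_right (H : R -> R) c l d : derivable_pt_lim H c l -> l < 0 -> 0 < d ->
  exists x, c < x < c + d /\ H x < H c.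
Proof.
  intros HD hl hd. destruct (HD (-l) ltac:(lra)) as [del Hdel].
  set (h := Rmin (d/2) (del/2)).
  assert (hm : 0 < h) by (apply Rmin_pos; pose proof (cond_pos del); lra).
  assert (h1 : h <= d/2) by apply Rmin_l.
  assert (h2 : h <= del/2) by apply Rmin_r.
  assert (hh : h <> 0) by lra.
  assert (ha : Rabs h < del) by (rewrite Rabs_pos_eq; lra).
  specialize (Hdel h hh ha).
  exists (c + h). split. lra.
  apply Rabs_def2 in Hdel. destruct Hdel as [Hq _].
  assert (q : (H (c + h) - H c) / h < 0) by lra.
  assert (E : H (c + h) - H c = ((H (c + h) - H c) / h) * h) by (field; lra).
  nra.
Qed.

Lemma RInt_sub_const (g : R -> R) a y : ex_RInt g a y ->
  RInt (fun t => g t - g a) a y = RInt g a y - (y - a) * g a.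
Proof.
  intros h.
  pose proof (RInt_minus g (fun _ => g a) a y h (ex_RInt_const _ _ _)) as E.
  rewrite RInt_const in E. exact E.
Qed.

Section Core.
Variables (g : R -> R) (a b : R).
Hypothesis hab : a < b.
Hypothesis hg : forall x, continuous g x.

Definition Hf x := if Rle_dec x a then g a else RInt g a x / (x - a).

Lemma exR u v : ex_RInt g u v.
Proof. apply (ex_RInt_continuous (V:=R_CompleteNormedModule)); intros; apply hg. Qed.

Lemma derF x : is_derive (fun y => RInt g a y) x (g x).
Proof.
  apply (is_derive_RInt _ _ a); [|apply hg].
  apply filter_forall; intros; apply RInt_correct, exR.
Qed.

Lemma derH x : a < x -> is_derive Hf x ((g x - Hf x)/(x-a)).
Proof.
  intros hx.
  assert (D : is_derive (fun t => RInt g a t / (t - a)) x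
     ((g x * (x - a) - RInt g a x * 1) / (x - a) ^ 2)).
  { apply (is_derive_div (fun t => RInt g a t) (fun t => t - a)). exact (derF x).
    auto_derive; auto; ring. lra. }
  assert (E : (g x * (x - a) - RInt g a x * 1) / (x - a) ^ 2 = (g x - Hf x)/(x-a)).
  { unfold Hf; destruct Rle_dec; [lra|]. field; lra. }
  rewrite E in D.
  eapply is_derive_ext_loc; [|exact D].
  exists (mkposreal (x - a) ltac:(lra)). intros y Hy.
  change (Rabs (y - x) < x - a) in Hy. apply Rabs_def2 in Hy.
  unfold Hf; destruct Rle_dec; [lra|reflexivity].
Qed.

Lemma contH x : a <= x -> continuity_pt Hf x.
Proof.
  intros [hx| <-].
  - apply continuity_pt_filterlim.
    apply (ex_derive_continuous (V:=R_NormedModule)). eexists. apply derH; auto.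
  - pose proof (proj2 (continuity_pt_filterlim g a) (hg a)) as Cg.
    unfold continuity_pt, continue_in, limit1_in, limit_in in *; simpl in *.
    intros eps heps. destruct (Cg (eps/2) ltac:(lra)) as [alp [halp Halp]].
    exists alp; split; auto. intros y [_ Hy].
    unfold Hf at 2; destruct (Rle_dec a a); [|lra].
    unfold Hf; destruct (Rle_dec y a).
    + unfold R_dist; rewrite Rminus_diag, Rabs_R0; lra.
    + unfold R_dist in *.
      assert (ya : a < y) by lra.
      assert (B : Rabs (RInt (fun t => g t - g a) a y) <= (y - a) * (eps/2)).
      { apply abs_RInt_le_const; [lra| |].
        apply (ex_RInt_minus (V:=R_NormedModule)); [apply exR| apply ex_RInt_const].
        intros t ht. destruct (Req_dec t a) as [->|tn].
        rewrite Rminus_diag, Rabs_R0; lra.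
        left; apply Halp; split; [split; [exact I| congruence] | apply Rabs_def2 in Hy; apply Rabs_def1; lra]. }
      rewrite RInt_sub_const in B by apply exR.
      replace (RInt g a y / (y - a) - g a) with ((RInt g a y - (y - a) * g a) / (y - a))
        by (field; lra).
      unfold Rdiv; rewrite Rabs_mult, Rabs_inv, (Rabs_pos_eq (y - a)) by lra.
      apply (Rmult_le_compat_r (/ (y - a))) in B; [|left; apply Rinv_0_lt_compat; lra].
      replace ((y - a) * (eps / 2) * / (y - a)) with (eps/2) in B by (field; lra).
      lra.
Qed.

Lemma core2 : g b > I_mean g a b -> g a >= I_mean g a b ->
  exists eta, a < eta < b /\ g eta = I_mean g a eta.
Proof.
  intros h1 h2.
  assert (Hb : Hf b = I_mean g a b) by (unfold Hf, I_mean; destruct Rle_dec; [lra|reflexivity]).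
  assert (Ha : Hf a = g a) by (unfold Hf; destruct Rle_dec; [reflexivity|lra]).
  assert (Db := derH b hab). apply is_derive_Reals in Db.
  destruct (deriv_pos_left Hf b _ (b - a) Db) as [c [hc Hc]].
  { rewrite Hb. apply Rdiv_lt_0_compat; lra. } lra.
  destruct (continuity_ab_min Hf a b ltac:(lra)) as [e [He he]].
  { intros; apply contH; lra. }
  assert (hec := He c ltac:(lra)).
  assert (ea : e <> a) by (intros ->; lra).
  assert (eb : e <> b) by (intros ->; lra).
  assert (hea : a < e < b) by lra.
  assert (De := derH e ltac:(lra)). apply is_derive_Reals in De.
  set (l := (g e - Hf e) / (e - a)) in De.
  destruct (Rtotal_order l 0) as [hl|[hl|hl]].
  - destruct (deriv_neg_right Hf e l (b - e) De hl ltac:(lra)) as [x [hx Hx]].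
    specialize (He x ltac:(lra)); lra.
  - exists e; split; auto.
    assert (g e = Hf e).
    { assert (g e - Hf e = l * (e - a)) by (unfold l; field; lra). nra. }
    rewrite H. unfold Hf, I_mean; destruct Rle_dec; [lra|reflexivity].
  - destruct (deriv_pos_left Hf e l (e - a) De hl ltac:(lra)) as [x [hx Hx]].
    specialize (He x ltac:(lra)); lra.
Qed.
End Core.

Lemma Imean_opp g a x : (forall y, continuous g y) ->
  I_mean (fun t => - g t) a x = - I_mean g a x.
Proof.
  intros hg. unfold I_mean.
  pose proof (RInt_opp (V:=R_CompleteNormedModule) g a x (exR g hg a x)) as E.
  change (RInt (fun t => - g t) a x = - RInt g a x) in E.
  rewrite E. unfold Rdiv. ring.
Qed.

Lemma core3 g a b : a < b -> (forall y, continuous g y) ->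
  (g a - I_mean g a b) * (g b - I_mean g a b) >= 0 ->
  exists eta, a < eta <= b /\ g eta = I_mean g a eta.
Proof.
  intros hab hg hs.
  destruct (Rtotal_order (g b) (I_mean g a b)) as [h|[h|h]].
  - assert (hg' : forall y, continuous (fun t => - g t) y)
      by (intros; apply (continuous_opp (V:=R_NormedModule)); auto).
    destruct (core2 (fun t => - g t) a b hab hg') as [e [he He]].
    + rewrite Imean_opp by auto. lra.
    + rewrite Imean_opp by auto. nra.
    + exists e; split; [lra|]. rewrite Imean_opp in He by auto. lra.
  - exists b; split; [lra|auto].
  - destruct (core2 g a b hab hg h) as [e [he He]]; [nra|].
    exists e; split; [lra|auto].
Qed.

Theorem mainTheorem6 (f : R -> R) (a b : R) (hab : a < b)
  (hf : continuous_on_Icc f a b)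
  (hsign : (f a - I_mean f a b) * (f b - I_mean f a b) >= 0) :
  exists eta, a < eta <= b /\ f eta = I_mean f a eta.
Proof.
  set (g := fun y => f (clamp a b y)).
  assert (hg : forall y, continuous g y) by (intros; apply clamp_cont; auto; lra).
  assert (Eg : forall x, a <= x <= b -> g x = f x)
    by (intros; unfold g; rewrite clamp_id; auto).
  assert (EI : forall x, a <= x <= b -> I_mean g a x = I_mean f a x).
  { intros x hx. unfold I_mean. f_equal. apply RInt_ext.
    intros y hy. apply Eg. unfold Rmin, Rmax in hy; destruct Rle_dec; lra. }
  destruct (core3 g a b hab hg) as [e [he He]].
  - rewrite EI, !Eg by lra. auto.
  - exists e; split; auto. rewrite <- Eg, <- EI by lra. auto.
Qed.
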